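(* Let $f:\mathbb{R}\to\mathbb{R}$ be strictly convex and continuously differentiable with $(f')^{-1}(x)\ge 0$ for all $x\in\mathbb{R}$. Fix $\alpha>0$, $\zeta\in(0,1)$, $\epsilon>0$, and set $\tilde\epsilon=\epsilon/(1-\zeta)$. For $v:\mathcal{S}\to\mathbb{R}$ and $\lambda\ge0$ on $\mathrm{supp}(\mu)$ define $A_v(s,a)=r(s,a)+\gamma\mathbb{E}_{s'\sim T(\cdot|s,a)}v(s')-v(s)$ and $$\mathcal{L}'(w,v,\lambda)=\zeta\,\mathbb{E}_{d^{\mathcal{D}}}\big[w A_v-\alpha f(w)\big]+(1-\gamma)\mathbb{E}_{s_0\sim\rho_0}[v(s_0)]+(1-\zeta)\,\mathbb{E}_{\mu}\big[w(A_v-\lambda)-\alpha f(w)+\tilde\epsilon\lambda\big],$$ and let $w^*=w^*_{v,\lambda}$ be the maximizer $w^*(s,a)=(f')^{-1}\big((A_v(s,a)-\mathbf{1}\{(s,a)\in\mathrm{supp}(\mu)\}\lambda(s,a))/\alpha\big)$ of $\max_{w\ge0}\mathcal{L}'(w,v,\lambda)$. Then the outer minimization problem $\min_{\lambda\ge 0,\,v}\mathcal{L}'(w^*_{v,\lambda},v,\lambda)$ is a convex optimization problem. Moreover, if $(\lambda^*,v^* )$ is an optimal solution, then $$\lambda^*(s,a)=\max\{0,\,A^*(s,a)-\alpha f'(\tilde\epsilon)\}\quad\forall (s,a)\in\mathrm{supp}(\mu),$$ where $A^*(s,a)=r(s,a)+\gamma\mathbb{E}_{s'\sim T(\cdot|s,a)}v^*(s')-v^*(s)$,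 and the optimal regularized advantage $\tilde A^*(s,a):=A^*(s,a)-\mathbf{1}\{(s,a)\in\mathrm{supp}(\mu)\}\lambda^*(s,a)$ satisfies $$\tilde A^*(s,a)=\begin{cases}A^*(s,a), & (s,a)\in\mathrm{supp}(d^{\mathcal{D}}),\\ \min\{\alpha f'(\tilde\epsilon),\,A^*(s,a)\}, & (s,a)\in\mathrm{supp}(\mu).\end{cases}$$
   Context: Setting: a Markov decision process with state space $\mathcal{S}$, action space $\mathcal{A}$, transition kernel $T(s'|s,a)$, reward function $r(s,a)$, discount factor $\gamma\in(0,1)$ and initial state distribution $\rho_0$. $d^{\mathcal{D}}$ is the empirical state-action distribution of an offline dataset, and $\mu$ is a state-action distribution with $\mathrm{supp}(\mu)\cap\mathrm{supp}(d^{\mathcal{D}})=\emptyset$ (out-of-distribution pairs). *)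

(* Defs.v *)
From HB Require Import structures.
From mathcomp Require Import all_boot all_order all_algebra.
From mathcomp Require Import all_classical all_reals all_analysis.
Set Implicit Arguments. Unset Strict Implicit. Unset Printing Implicit Defensive.
Import Order.TTheory GRing.Theory Num.Theory numFieldNormedType.Exports.
Local Open Scope ring_scope.

Section Defs.
Variables (R : realType) (S A : finType).

Definition adv (r : S -> A -> R) (T : S -> A -> S -> R) (gamma : R)
  (v : S -> R) (s : S) (a : A) : R :=
  r s a + gamma * (\sum_(s' : S) T s a s' * v s') - v s.

Definition suppmu_lam (mu : S -> A -> R) (lam : S -> A -> R) (s : S) (a : A) : R :=
  if 0 < mu s a then lam s a else 0.

Definition reg_adv r T gamma mu (v : S -> R) lam s a : R :=
  adv r T gamma v s a - suppmu_lam mu lam s a.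

Definition Lprime (f : R -> R) (alpha zeta gamma epst : R)
  (r : S -> A -> R) (T : S -> A -> S -> R) (rho0 : S -> R)
  (dD mu : S -> A -> R) (w : S -> A -> R) (v : S -> R) (lam : S -> A -> R) : R :=
  zeta * (\sum_(s : S) \sum_(a : A)
            dD s a * (w s a * adv r T gamma v s a - alpha * f (w s a)))
  + (1 - gamma) * (\sum_(s : S) rho0 s * v s)
  + (1 - zeta) * (\sum_(s : S) \sum_(a : A)
            mu s a * (w s a * (adv r T gamma v s a - lam s a)
                      - alpha * f (w s a) + epst * lam s a)).

(* w*_{v,lambda}(s,a) = (f')^{-1}((A_v(s,a) - 1{supp mu} lambda(s,a)) / alpha),
   where finv is (f')^{-1}. *)
Definition wstar (finv : R -> R) (alpha gamma : R) r T (mu : S -> A -> R)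
  (v : S -> R) (lam : S -> A -> R) (s : S) (a : A) : R :=
  finv (reg_adv r T gamma mu v lam s a / alpha).

Definition outer_obj f finv alpha zeta gamma epst r T rho0 dD mu
  (v : S -> R) (lam : S -> A -> R) : R :=
  Lprime f alpha zeta gamma epst r T rho0 dD mu
    (wstar finv alpha gamma r T mu v lam) v lam.

Definition feasible (mu lam : S -> A -> R) : Prop :=
  forall s a, 0 < mu s a -> 0 <= lam s a.

End Defs.

(* Main.v *)
Require Import Defs.
From HB Require Import structures.
From mathcomp Require Import all_boot all_order all_algebra.
From mathcomp Require Import all_classical all_reals all_analysis.
From mathcomp Require Import ring lra.
Import Order.TTheory GRing.Theory Num.Theory numFieldNormedType.Exports.
Set Implicit Arguments. Unset Strict Implicit.
Local Open Scope ring_scope.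
Local Open Scope classical_set_scope.
Lemma tangent (R : realType) (f fp : R -> R) (x0 x : R) :
  (forall x y t : R, 0 < x -> 0 < y -> x != y -> 0 < t < 1 ->
     f (t * x + (1 - t) * y) < t * f x + (1 - t) * f y) ->
  is_derive x0 1 f (fp x0) -> 0 < x0 -> 0 < x ->
  f x0 + fp x0 * (x - x0) <= f x.
Proof.
move=> hconv hd x0p xp.
set q := (fun h : R => h^-1 *: ((f \o shift x0) (h *: 1) - f x0)).
have cq : q @ 0^' --> fp x0.
  rewrite -(@derive_val _ _ _ _ _ _ _ hd).
  exact: (@ex_derive _ _ _ _ _ _ _ hd).
have cqr : q @ 0^'+ --> fp x0.
  move=> B /cq /nbhs_ballP [_ /posnumP[e] xe_B].
  by exists e%:num => //= y xe_y; rewrite lt_def => /andP [xney _]; apply: xe_B.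
have cql : q @ 0^'- --> fp x0.
  move=> B /cq /nbhs_ballP [_ /posnumP[e] xe_B].
  exists e%:num => //= y xe_y; rewrite lt_def => /andP [xney _].
  by apply: xe_B => //; rewrite eq_sym.
have qE h : q h = h^-1 * (f (x0 + h) - f x0).
  by rewrite /q /= -[h%:A]/(h * 1) mulr1 [h + x0]addrC.
case: (ltgtP x0 x) => hx; last by rewrite hx subrr mulr0 addr0.
-
  set d := x - x0.
  have dp : 0 < d by rewrite subr_gt0.
  have : fp x0 <= (f x - f x0) / d.
    apply: (cvgr_to_le cqr).
    exists d => //= h hd0 h0.
    move: hd0; rewrite /ball /= sub0r normrN gtr0_norm // => hd0.
    rewrite qE.
    have t01 : 0 < h / d < 1.
      by rewrite divr_gt0 //= ltr_pdivrMr // mul1r.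
    have := hconv x x0 (h / d) xp x0p (negbT (gt_eqF hx)) t01.
    have -> : h / d * x + (1 - h / d) * x0 = x0 + h.
      by rewrite /d; field; rewrite gt_eqF.
    move=> H.
    have E : h / d * f x + (1 - h / d) * f x0 - f x0 = h / d * (f x - f x0) by ring.
    have H2 : f (x0 + h) - f x0 < h / d * (f x - f x0) by rewrite -E; lra.
    have hp : 0 < h^-1 by rewrite invr_gt0.
    have : h^-1 * (f (x0 + h) - f x0) < h^-1 * (h / d * (f x - f x0)) by rewrite ltr_pM2l.
    move=> /ltW.
    suff -> : h^-1 * (h / d * (f x - f x0)) = (f x - f x0) / d by [].
    by field; rewrite !gt_eqF.
  rewrite ler_pdivlMr // mulrC; lra.
-
  set d := x0 - x.
  have dp : 0 < d by rewrite subr_gt0.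
  have : - ((f x - f x0) / d) <= fp x0.
    apply: (cvgr_to_ge cql).
    exists d => //= h hd0 h0.
    move: hd0; rewrite /ball /= sub0r normrN ltr0_norm // => hd0.
    rewrite qE.
    have t01 : 0 < - h / d < 1.
      rewrite divr_gt0 ?oppr_gt0 //= ltr_pdivrMr // mul1r. lra.
    have := hconv x x0 (- h / d) xp x0p (negbT (lt_eqF hx)) t01.
    have -> : - h / d * x + (1 - - h / d) * x0 = x0 + h.
      by rewrite /d; field; rewrite gt_eqF.
    move=> H.
    have E : - h / d * f x + (1 - - h / d) * f x0 - f x0 = - h / d * (f x - f x0) by ring.
    have H2 : f (x0 + h) - f x0 < - h / d * (f x - f x0) by rewrite -E; lra.
    have hn : h^-1 < 0 by rewrite invr_lt0.
    have : h^-1 * (- h / d * (f x - f x0)) < h^-1 * (f (x0 + h) - f x0) by rewrite ltr_nM2l.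
    move=> /ltW.
    suff -> : h^-1 * (- h / d * (f x - f x0)) = - ((f x - f x0) / d) by [].
    by field; rewrite gt_eqF // lt_eqF.
  move=> H.
  have : - (f x - f x0) <= fp x0 * d.
    by rewrite -ler_pdivrMr // mulNr.
  rewrite /d. lra.
Qed.
Lemma tangent_strict (R : realType) (f fp : R -> R) (x0 x : R) :
  (forall x y t : R, 0 < x -> 0 < y -> x != y -> 0 < t < 1 ->
     f (t * x + (1 - t) * y) < t * f x + (1 - t) * f y) ->
  (forall x : R, 0 < x -> is_derive x 1 f (fp x)) -> 0 < x0 -> 0 < x -> x != x0 ->
  f x0 + fp x0 * (x - x0) < f x.
Proof.
move=> hconv hder x0p xp hne.
set m := 2^-1 * x + (1 - 2^-1) * x0.
have mp : 0 < m by rewrite /m; lra.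
have t01 : 0 < (2^-1 : R) < 1 by apply/andP; split; lra.
have H1 := hconv x x0 2^-1 xp x0p hne t01.
have H2 := tangent hconv (hder x0 x0p) x0p mp.
have E : fp x0 * (m - x0) = 2^-1 * (fp x0 * (x - x0)) by rewrite /m; ring.
rewrite E in H2.
lra.
Qed.

Definition G (R : realType) (f finv : R -> R) (alpha y : R) : R :=
  finv (y / alpha) * y - alpha * f (finv (y / alpha)).

Lemma G_ge (R : realType) (f fp finv : R -> R) (alpha w y : R) :
  (forall x y t : R, 0 < x -> 0 < y -> x != y -> 0 < t < 1 ->
     f (t * x + (1 - t) * y) < t * f x + (1 - t) * f y) ->
  (forall x : R, 0 < x -> is_derive x 1 f (fp x)) ->
  (forall y : R, 0 < finv y /\ fp (finv y) = y) ->
  0 < alpha -> 0 < w ->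
  w * y - alpha * f w <= G f finv alpha y /\
  (w != finv (y / alpha) -> w * y - alpha * f w < G f finv alpha y).
Proof.
move=> hconv hder hfinv ha wp.
have [x0p hfx0] := hfinv (y / alpha).
set x0 := finv (y / alpha) in x0p hfx0 *.
rewrite /G -/x0.
have E : alpha * (f x0 + y / alpha * (w - x0)) = alpha * f x0 + y * (w - x0).
  by field; rewrite gt_eqF.
split.
- have H := tangent hconv (hder x0 x0p) x0p wp.
  rewrite hfx0 in H.
  have := ler_wpM2l (ltW ha) H.
  rewrite E => H3.
  have E2 : y * (w - x0) = w * y - x0 * y by ring.
  lra.
- move=> hne.
  have H := tangent_strict hconv hder x0p wp hne.
  rewrite hfx0 in H.
  have : alpha * (f x0 + y / alpha * (w - x0)) < alpha * f w by rewrite ltr_pM2l.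
  rewrite E => H3.
  have E2 : y * (w - x0) = w * y - x0 * y by ring.
  lra.
Qed.

Lemma G_tan (R : realType) (f fp finv : R -> R) (alpha y y0 : R) :
  (forall x y t : R, 0 < x -> 0 < y -> x != y -> 0 < t < 1 ->
     f (t * x + (1 - t) * y) < t * f x + (1 - t) * f y) ->
  (forall x : R, 0 < x -> is_derive x 1 f (fp x)) ->
  (forall y : R, 0 < finv y /\ fp (finv y) = y) ->
  0 < alpha ->
  G f finv alpha y0 + finv (y0 / alpha) * (y - y0) <= G f finv alpha y /\
  (y != y0 -> G f finv alpha y0 + finv (y0 / alpha) * (y - y0) < G f finv alpha y).
Proof.
move=> hconv hder hfinv ha.
have [w0p _] := hfinv (y0 / alpha).
have [H1 H2] := G_ge y hconv hder hfinv ha w0p.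
have E : G f finv alpha y0 + finv (y0 / alpha) * (y - y0) =
   finv (y0 / alpha) * y - alpha * f (finv (y0 / alpha)) by rewrite /G; ring.
rewrite E; split => // hne; apply: H2.
apply/negP => /eqP heq.
have h1 := (hfinv (y0 / alpha)).2.
have h2 := (hfinv (y / alpha)).2.
rewrite heq h2 in h1.
move/negP: hne; apply; apply/eqP.
have : y / alpha * alpha = y0 / alpha * alpha by rewrite h1.
by rewrite !divfK ?gt_eqF.
Qed.

Lemma G_conv (R : realType) (f fp finv : R -> R) (alpha y1 y2 t : R) :
  (forall x y t : R, 0 < x -> 0 < y -> x != y -> 0 < t < 1 ->
     f (t * x + (1 - t) * y) < t * f x + (1 - t) * f y) ->
  (forall x : R, 0 < x -> is_derive x 1 f (fp x)) ->
  (forall y : R, 0 < finv y /\ fp (finv y) = y) ->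
  0 < alpha -> 0 <= t <= 1 ->
  G f finv alpha (t * y1 + (1 - t) * y2) <=
    t * G f finv alpha y1 + (1 - t) * G f finv alpha y2.
Proof.
move=> hconv hder hfinv ha /andP [t0 t1].
set y := t * y1 + (1 - t) * y2.
have [H1 _] := G_tan y1 y hconv hder hfinv ha.
have [H2 _] := G_tan y2 y hconv hder hfinv ha.
set w := finv (y / alpha) in H1 H2.
have t1' : 0 <= 1 - t by lra.
have K1 := ler_wpM2l t0 H1.
have K2 := ler_wpM2l t1' H2.
have E : t * (G f finv alpha y + w * (y1 - y)) + (1 - t) * (G f finv alpha y + w * (y2 - y))
   = G f finv alpha y by rewrite /y; ring.
lra.
Qed.
Lemma finv_le (R : realType) (f fp finv : R -> R) (e y : R) :
  (forall x y t : R, 0 < x -> 0 < y -> x != y -> 0 < t < 1 ->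
     f (t * x + (1 - t) * y) < t * f x + (1 - t) * f y) ->
  (forall x : R, 0 < x -> is_derive x 1 f (fp x)) ->
  (forall y : R, 0 < finv y /\ fp (finv y) = y) ->
  (forall x : R, 0 < x -> finv (fp x) = x) ->
  0 < e -> y <= fp e -> finv y <= e.
Proof.
move=> hconv hder hfinv hfinv2 ep hy.
rewrite leNgt; apply/negP => hlt.
have [bp hb] := hfinv y.
set b := finv y in bp hb hlt.
have T1 := tangent hconv (hder e ep) ep bp.
have T2 := tangent hconv (hder b bp) bp ep.
have H : fp e * (b - e) <= fp b * (b - e).
  rewrite -subr_ge0.
  have E : fp b * (b - e) - fp e * (b - e) =
     (f b + fp b * (e - b) - f e) * (-1) + (f e + fp e * (b - e) - f b) * (-1) by ring.
  rewrite E; apply: addr_ge0; rewrite mulrN1 oppr_ge0 subr_le0 //.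
rewrite ler_pM2r ?subr_gt0 // hb in H.
have : y = fp e by apply/eqP; rewrite eq_le hy H.
move=> hye.
by move: hlt; rewrite /b hye hfinv2 // ltxx.
Qed.

Lemma hmin (R : realType) (f fp finv : R -> R) (alpha e A l : R) :
  (forall x y t : R, 0 < x -> 0 < y -> x != y -> 0 < t < 1 ->
     f (t * x + (1 - t) * y) < t * f x + (1 - t) * f y) ->
  (forall x : R, 0 < x -> is_derive x 1 f (fp x)) ->
  (forall y : R, 0 < finv y /\ fp (finv y) = y) ->
  (forall x : R, 0 < x -> finv (fp x) = x) ->
  0 < alpha -> 0 < e -> 0 <= l -> l != Num.max 0 (A - alpha * fp e) ->
  G f finv alpha (A - Num.max 0 (A - alpha * fp e)) + e * Num.max 0 (A - alpha * fp e)
   < G f finv alpha (A - l) + e * l.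
Proof.
move=> hconv hder hfinv hfinv2 ha ep l0 hne.
case: (leP (A - alpha * fp e) 0) => hA.
- rewrite (max_l hA) in hne *.
  rewrite subr0 mulr0 addr0.
  have lp : 0 < l by rewrite lt_def hne l0.
  have [_ H] := G_tan (A - l) A hconv hder hfinv ha.
  have hne2 : A - l != A.
    by apply/negP => /eqP h; move: hne; rewrite -subr_eq0 => /negP; apply;
      apply/eqP; rewrite -(subrr A) -{2}h; ring.
  have {}H := H hne2.
  have hw : finv (A / alpha) <= e.
    apply: (finv_le hconv hder hfinv hfinv2 ep).
    by rewrite ler_pdivrMr // mulrC -subr_le0.
  have hw2 : finv (A / alpha) * l <= e * l by rewrite ler_pM2r.
  have E : finv (A / alpha) * (A - l - A) = - (finv (A / alpha) * l) by ring.
  rewrite E in H.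
  lra.
- rewrite (max_r (ltW hA)) in hne *.
  have -> : A - (A - alpha * fp e) = alpha * fp e by ring.
  have hne2 : A - l != alpha * fp e.
    apply/negP => /eqP h; move/negP: hne; apply; apply/eqP; rewrite -h; ring.
  have [_ H] := G_tan (A - l) (alpha * fp e) hconv hder hfinv ha.
  have {}H := H hne2.
  rewrite mulrC mulfK ?gt_eqF // hfinv2 // in H.
  rewrite -subr_gt0.
  have E : G f finv alpha (A - l) + e * l -
    (G f finv alpha (fp e * alpha) + e * (A - fp e * alpha)) =
    G f finv alpha (A - l) - (G f finv alpha (fp e * alpha) + e * (A - l - fp e * alpha)) by ring.
  by rewrite [alpha * fp e]mulrC E subr_gt0.
Qed.
Definition Kt (R : realType) (S A : finType) (f finv : R -> R) (alpha zeta gamma epst : R)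
  (r : S -> A -> R) (T : S -> A -> S -> R) (dD mu : S -> A -> R)
  (v : S -> R) (l : S -> A -> R) (s : S) (a : A) : R :=
  zeta * (dD s a * G f finv alpha (adv r T gamma v s a)) +
  (1 - zeta) * (mu s a * (G f finv alpha (adv r T gamma v s a - l s a) + epst * l s a)).

Lemma J_eq (R : realType) (S A : finType) (f finv : R -> R) (alpha zeta gamma epst : R)
  (r : S -> A -> R) (T : S -> A -> S -> R) (rho0 : S -> R) (dD mu : S -> A -> R)
  (v : S -> R) (l : S -> A -> R) :
  (forall s a, 0 <= dD s a) -> (forall s a, 0 <= mu s a) ->
  (forall s a, ~ (0 < dD s a /\ 0 < mu s a)) ->
  outer_obj f finv alpha zeta gamma epst r T rho0 dD mu v l =
  \sum_(s : S) \sum_(a : A) Kt f finv alpha zeta gamma epst r T dD mu v l s a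
  + (1 - gamma) * (\sum_(s : S) rho0 s * v s).
Proof.
move=> hdD hmu hdisj.
rewrite /outer_obj /Lprime -addrA [(1 - gamma) * _ + _]addrC addrA; congr (_ + _).
rewrite !mulr_sumr -big_split; apply: eq_bigr => s _.
rewrite !mulr_sumr -big_split; apply: eq_bigr => a _ /=.
rewrite /Kt /wstar /reg_adv /suppmu_lam.
case: (boolP (0 < mu s a)) => hm.
- have hd0 : dD s a = 0.
    apply/eqP; rewrite eq_le hdD andbT leNgt; apply/negP => h.
    exact: (hdisj s a (conj h hm)).
  rewrite hd0 !mul0r /G; ring.
- have hm0 : mu s a = 0.
    by apply/eqP; rewrite eq_le hmu andbT leNgt.
  rewrite hm0 subr0 !mul0r /G; ring.
Qed.

Lemma sum_single (R : realType) (S A : finType) (F H : S -> A -> R) s0 a0 :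
  (forall s a, ~ (s = s0 /\ a = a0) -> F s a = H s a) ->
  \sum_(s : S) \sum_(a : A) F s a - \sum_(s : S) \sum_(a : A) H s a = F s0 a0 - H s0 a0.
Proof.
move=> hFH.
rewrite (bigD1 s0) // [X in _ - X](bigD1 s0) //=.
rewrite (eq_bigr (fun s => \sum_(a : A) H s a)); last first.
  move=> s hs; apply: eq_bigr => a _; apply: hFH; case=> e _.
  by rewrite e eqxx in hs.
rewrite (bigD1 a0) // [X in _ - (X + _)](bigD1 a0) //=.
rewrite (eq_bigr (fun a => H s0 a)); last first.
  move=> a ha; apply: hFH; case=> _ e.
  by rewrite e eqxx in ha.
ring.
Qed.
Local Close Scope classical_set_scope.

Theorem proposition2 (R : realType) (S A : finType)
  (T : S -> A -> S -> R) (r : S -> A -> R) (gamma : R) (rho0 : S -> R)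
  (dD mu : S -> A -> R)
  (f fp finv : R -> R) (alpha zeta eps : R) :
  (* MDP *)
  0 < gamma < 1 ->
  (forall s a s', 0 <= T s a s') ->
  (forall s a, \sum_(s' : S) T s a s' = 1) ->
  (forall s, 0 <= rho0 s) -> \sum_(s : S) rho0 s = 1 ->
  (* dataset distribution and OOD distribution with disjoint supports *)
  (forall s a, 0 <= dD s a) -> \sum_(s : S) \sum_(a : A) dD s a = 1 ->
  (forall s a, 0 <= mu s a) -> \sum_(s : S) \sum_(a : A) mu s a = 1 ->
  (forall s a, ~ (0 < dD s a /\ 0 < mu s a)) ->
  (* f strictly convex and C^1 on its domain (0, +oo), with derivative fp *)
  (forall x y t : R, 0 < x -> 0 < y -> x != y -> 0 < t < 1 ->
     f (t * x + (1 - t) * y) < t * f x + (1 - t) * f y) ->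
  (forall x : R, 0 < x -> is_derive x 1 f (fp x)) ->
  {in `]0, +oo[, continuous fp} ->
  (* finv = (f')^{-1} : R -> R, defined on all of R; its values lie in the domain (0,+oo) *)
  (forall y : R, 0 < finv y /\ fp (finv y) = y) ->
  (forall x : R, 0 < x -> finv (fp x) = x) ->
  (* parameters *)
  0 < alpha -> 0 < zeta < 1 -> 0 < eps ->
  let epst := eps / (1 - zeta) in
  let J := outer_obj f finv alpha zeta gamma epst r T rho0 dD mu in
  (* (1) the outer problem min_{lambda >= 0, v} J(v, lambda) is convex:
         convex feasible set and convex objective on it *)
  (forall (v1 v2 : S -> R) (l1 l2 : S -> A -> R) (t : R),
     feasible mu l1 -> feasible mu l2 -> 0 <= t <= 1 ->
     let v := fun s => t * v1 s + (1 - t) * v2 s in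
     let l := fun s a => t * l1 s a + (1 - t) * l2 s a in
     feasible mu l /\ J v l <= t * J v1 l1 + (1 - t) * J v2 l2)
  /\
  (* (2) characterization of an optimal solution *)
  (forall (vstar : S -> R) (lstar : S -> A -> R),
     feasible mu lstar ->
     (forall (v : S -> R) (l : S -> A -> R), feasible mu l -> J vstar lstar <= J v l) ->
     let Astar := adv r T gamma vstar in
     let Atilde := reg_adv r T gamma mu vstar lstar in
     (forall s a, 0 < mu s a -> lstar s a = Num.max 0 (Astar s a - alpha * fp epst))
     /\ (forall s a, 0 < dD s a -> Atilde s a = Astar s a)
     /\ (forall s a, 0 < mu s a -> Atilde s a = Num.min (alpha * fp epst) (Astar s a))).
Proof.
move=> hg hT hTs hrho hrhos hdD hdDs hmu hmus hdisj hconv hder hcont hfinv hfinv2 ha hz he.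
move=> epst J.
have epp : 0 < epst by rewrite /epst divr_gt0 // subr_gt0; case/andP: hz.
have z0 : 0 <= zeta by case/andP: hz => /ltW.
have z1 : 0 <= 1 - zeta by case/andP: hz => _ h; rewrite subr_ge0 ltW.
split.
- move=> v1 v2 l1 l2 t f1 f2 ht v l.
  have t0 : 0 <= t by case/andP: ht.
  have t1 : 0 <= 1 - t by case/andP: ht => _ h; rewrite subr_ge0.
  split.
    move=> s a hm; rewrite /l; apply: addr_ge0; apply: mulr_ge0 => //.
      exact: f1. exact: f2.
  rewrite /J !J_eq //.
  have hadv : forall s a, adv r T gamma v s a =
      t * adv r T gamma v1 s a + (1 - t) * adv r T gamma v2 s a.
    move=> s a; rewrite /adv.
    have -> : \sum_(s' : S) T s a s' * v s' =
       t * (\sum_(s' : S) T s a s' * v1 s') + (1 - t) * (\sum_(s' : S) T s a s' * v2 s').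
      by rewrite !mulr_sumr -big_split; apply: eq_bigr => s' _ /=; rewrite /v; ring.
    rewrite /v; ring.
  have hrhoE : \sum_(s : S) rho0 s * v s =
       t * (\sum_(s : S) rho0 s * v1 s) + (1 - t) * (\sum_(s : S) rho0 s * v2 s).
    by rewrite !mulr_sumr -big_split; apply: eq_bigr => s _ /=; rewrite /v; ring.
  have HK : \sum_(s : S) \sum_(a : A) Kt f finv alpha zeta gamma epst r T dD mu v l s a <=
     t * (\sum_(s : S) \sum_(a : A) Kt f finv alpha zeta gamma epst r T dD mu v1 l1 s a) +
     (1 - t) * (\sum_(s : S) \sum_(a : A) Kt f finv alpha zeta gamma epst r T dD mu v2 l2 s a).
    rewrite !mulr_sumr -big_split; apply: ler_sum => s _.
    rewrite !mulr_sumr -big_split; apply: ler_sum => a _ /=.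
    rewrite /Kt hadv.
    set a1 := adv r T gamma v1 s a.
    set a2 := adv r T gamma v2 s a.
    have -> : t * a1 + (1 - t) * a2 - l s a = t * (a1 - l1 s a) + (1 - t) * (a2 - l2 s a).
      by rewrite /l; ring.
    have g1 := G_conv a1 a2 hconv hder hfinv ha ht.
    have g2 := G_conv (a1 - l1 s a) (a2 - l2 s a) hconv hder hfinv ha ht.
    have P0 : 0 <= zeta * dD s a by apply: mulr_ge0.
    have Q0 : 0 <= (1 - zeta) * mu s a by apply: mulr_ge0.
    have M1 := ler_wpM2l P0 g1.
    have M2 := ler_wpM2l Q0 g2.
    rewrite -subr_ge0.
    set G1 := G f finv alpha (t * a1 + (1 - t) * a2) in M1 *.
    set G2 := G f finv alpha (t * (a1 - l1 s a) + (1 - t) * (a2 - l2 s a)) in M2 *.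
    set E := (X in 0 <= X).
    have -> : E = (zeta * dD s a * (t * G f finv alpha a1 + (1 - t) * G f finv alpha a2) - zeta * dD s a * G1)
       + ((1 - zeta) * mu s a * (t * G f finv alpha (a1 - l1 s a) + (1 - t) * G f finv alpha (a2 - l2 s a))
          - (1 - zeta) * mu s a * G2).
      by rewrite /E /l; ring.
    by apply: addr_ge0; rewrite subr_ge0.
  rewrite hrhoE -subr_ge0.
  set S0 := \sum_(s : S) \sum_(a : A) Kt f finv alpha zeta gamma epst r T dD mu v l s a in HK *.
  set S1 := \sum_(s : S) \sum_(a : A) Kt f finv alpha zeta gamma epst r T dD mu v1 l1 s a in HK *.
  set S2 := \sum_(s : S) \sum_(a : A) Kt f finv alpha zeta gamma epst r T dD mu v2 l2 s a in HK *.
  set E := (X in 0 <= X).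
  have -> : E = t * S1 + (1 - t) * S2 - S0 by rewrite /E; ring.
  by rewrite subr_ge0.
- move=> vstar lstar hfeas hopt Astar Atilde.
  set c := alpha * fp epst.
  have key : forall s a, 0 < mu s a -> lstar s a = Num.max 0 (Astar s a - c).
    move=> s0 a0 hm.
    case: (eqVneq (lstar s0 a0) (Num.max 0 (Astar s0 a0 - c))) => // hne.
    exfalso.
    set c0 := Num.max 0 (Astar s0 a0 - c) in hne.
    pose l' := fun s a => if (s == s0) && (a == a0) then c0 else lstar s a.
    have c00 : 0 <= c0 by rewrite /c0 le_max lexx.
    have feas' : feasible mu l'.
      move=> s a hm'; rewrite /l'; case: ifP => _ //; exact: hfeas.
    have H := hopt vstar l' feas'.
    rewrite /J !J_eq // lerD2r in H.
    have hsame : forall s a, ~ (s = s0 /\ a = a0) ->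
        Kt f finv alpha zeta gamma epst r T dD mu vstar l' s a =
        Kt f finv alpha zeta gamma epst r T dD mu vstar lstar s a.
      move=> s a hsa; rewrite /Kt /l'.
      case: ifP => // /andP [/eqP e1 /eqP e2]; by exfalso; apply: hsa.
    have hdiff := sum_single hsame.
    have hd0 : 0 <= Kt f finv alpha zeta gamma epst r T dD mu vstar l' s0 a0 -
                   Kt f finv alpha zeta gamma epst r T dD mu vstar lstar s0 a0.
      by rewrite -hdiff subr_ge0.
    have hl0 : 0 <= lstar s0 a0 by exact: hfeas.
    have hh := hmin hconv hder hfinv hfinv2 ha epp hl0 hne.
    move: hd0.
    have -> : Kt f finv alpha zeta gamma epst r T dD mu vstar l' s0 a0 -
              Kt f finv alpha zeta gamma epst r T dD mu vstar lstar s0 a0 =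
        ((1 - zeta) * mu s0 a0) *
        ((G f finv alpha (adv r T gamma vstar s0 a0 - c0) + epst * c0) -
         (G f finv alpha (adv r T gamma vstar s0 a0 - lstar s0 a0) + epst * lstar s0 a0)).
      by rewrite /Kt /l' !eqxx /=; ring.
    have zp : 0 < (1 - zeta) * mu s0 a0.
      by apply: mulr_gt0 => //; case/andP: hz => _ h; rewrite subr_gt0.
    rewrite pmulr_rge0 // subr_ge0 leNgt.
    by rewrite /c0 /c /Astar hh.
  split; first exact: key.
  split.
    move=> s a hd; rewrite /Atilde /reg_adv /suppmu_lam.
    have hm : ~~ (0 < mu s a) by apply/negP => hm; exact: (hdisj s a (conj hd hm)).
    by rewrite (negbTE hm) subr0.
  move=> s a hm; rewrite /Atilde /reg_adv /suppmu_lam hm key // -/(Astar s a).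
  case: (leP (Astar s a - c) 0) => hA.
    by rewrite subr0 min_r // -subr_le0.
  have -> : Astar s a - (Astar s a - c) = c by ring.
  rewrite min_l // ltW // -subr_gt0 //.
Qed.
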